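(* Let $L>0,\alpha>0$. For any $b\in\Lambda(\alpha)$ and any $\psi\in E_L$, $\int_{[0,L)}\psi'(x)^2dx-\int_{[0,L)}b(x)\psi(x)^2dx\ge-(\alpha+\alpha^2L^2)\int_{[0,L)}\psi(x)^2dx$.
   Context: $\Lambda(\alpha)$: $b\in C^1(\mathbb R)$, $b\ge0$, $L$-periodic, $\int_0^Lb=\alpha L$. $H^1_{per}=\{\varphi\in H^1_{loc}(\mathbb R):\varphi(x+L)=\varphi(x)\}$ and $E_L=\{\psi\in H^1_{per}:\psi(x)>0 \text{ for all }x\}$. *)

(* Defs.v *)
From HB Require Import structures.
From mathcomp Require Import all_boot all_order all_algebra.
From mathcomp Require Import all_classical all_reals all_analysis.
Set Implicit Arguments. Unset Strict Implicit. Unset Printing Implicit Defensive.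
Import Order.TTheory GRing.Theory Num.Theory.
Import numFieldNormedType.Exports.
Local Open Scope classical_set_scope.
Local Open Scope ring_scope.

Section Defs.
Variable R : realType.
Local Notation mu := (@lebesgue_measure R).

Definition periodic (L : R) (f : R -> R) : Prop := forall x, f (x + L) = f x.

Definition C1 (f : R -> R) : Prop :=
  (forall x, derivable f x 1) /\ continuous (derive1 f).

Definition Lambda (L alpha : R) (b : R -> R) : Prop :=
  [/\ C1 b, (forall x, 0 <= b x), periodic L b &
      Rintegral mu `[0, L] b = alpha * L].

(* dpsi is the (weak) derivative of psi, psi in H^1_loc(R): in dimension one,
   psi in H^1_loc(R) iff psi (its continuous representative) is locally
   absolutely continuous, psi(y) - psi(x) = int_x^y dpsi, with dpsi in L^2_loc. *)
Definition H1loc_deriv (psi dpsi : R -> R) : Prop :=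
  [/\ measurable_fun setT dpsi,
      (forall a c, a <= c -> mu.-integrable `[a, c] (fun x => ((dpsi x) ^+ 2)%:E)) &
      (forall a c, a <= c -> psi c - psi a = Rintegral mu `[a, c] dpsi)].

Definition E_L (L : R) (psi dpsi : R -> R) : Prop :=
  [/\ H1loc_deriv psi dpsi, periodic L psi & forall x, 0 < psi x].

End Defs.

(* Main.v *)
Require Import Defs.
From HB Require Import structures.
From mathcomp Require Import all_boot all_order all_algebra.
From mathcomp Require Import all_classical all_reals all_analysis.
From mathcomp Require Import measurable_realfun.
From mathcomp Require Import ring lra.
Import Order.TTheory GRing.Theory Num.Theory.
Import numFieldNormedType.Exports.
Local Open Scope classical_set_scope.
Local Open Scope ring_scope.
Local Notation mu := (@lebesgue_measure _).

Lemma muitv (R : realType) (a b : R) : a <= b -> mu `[a, b] = (b - a)%:E.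
Proof. rewrite le_eqVlt => /predU1P[<-|ab]; rewrite lebesgue_measure_itv /= lte_fin.
  by rewrite ltxx subrr.
by rewrite ab EFinB. Qed.

Lemma int_cst (R : realType) (a b k : R) : a <= b ->
  mu.-integrable `[a, b] (EFin \o cst k).
Proof.
move=> ab; apply/integrableP; split; first exact/measurable_EFinP.
have -> : (\int[mu]_(x in `[a, b]) `|(EFin \o cst k) x|)%E
   = (\int[mu]_(x in `[a, b]) cst (`|k|%:E) x)%E by [].
by rewrite integral_cst //= muitv // -EFinM ltry.
Qed.

Lemma Rint_cst (R : realType) (a b k : R) : a <= b ->
  Rintegral mu `[a, b] (fun=> k) = k * (b - a).
Proof. by move=> ab; rewrite Rintegral_cst //= (muitv _ _ _ ab). Qed.

Lemma dom_int (R : realType) (D : set R) (g h : R -> R) : measurable D ->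
  mu.-integrable D (EFin \o g) -> measurable_fun D h ->
  (forall x, D x -> `|h x| <= `|g x|) -> mu.-integrable D (EFin \o h).
Proof.
move=> mD ig mh hg; eapply le_integrable; [exact: mD| | |exact: ig].
  exact/measurable_EFinP.
by move=> x Dx /=; rewrite lee_fin hg.
Qed.

Lemma Rint_subset (R : realType) (A B : set R) (g : R -> R) :
  measurable A -> measurable B -> A `<=` B -> (forall x, B x -> 0 <= g x) ->
  mu.-integrable B (EFin \o g) ->
  Rintegral mu A g <= Rintegral mu B g.
Proof.
move=> mA mB AB g0 ig.
have iA : mu.-integrable A (EFin \o g) by exact: integrableS ig.
rewrite /Rintegral fine_le //. all: try (by apply: integrable_fin_num).
apply: ge0_subset_integral => //.
  by case/integrableP: ig.
Qed.


Lemma f_int (R : realType) (psi f : R -> R) : H1loc_deriv psi f ->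
  forall a c, a <= c -> mu.-integrable `[a, c] (EFin \o f).
Proof.
case=> mf if2 _ a c ac.
apply: (@dom_int _ _ (fun x => f x ^+ 2 + 1)) => //.
- rewrite (_ : EFin \o _ = (fun x => (f x ^+ 2)%:E) \+ (EFin \o cst 1)).
    by apply: integrableD => //; [exact: if2| exact: int_cst].
  by apply/funext => x /=; rewrite EFinD.
- exact: measurable_funS mf.
move=> x _; rewrite [X in _ <= X]ger0_norm; last by rewrite addr_ge0 // sqr_ge0.
case: (lerP `|f x| 1) => h.
  by rewrite (le_trans h) // lerDr sqr_ge0.
rewrite -real_normK ?num_real //. 
by rewrite ler_wpDr // expr2 ler_peMl // ltW.
Qed.
Arguments f_int {R psi f}.
Arguments dom_int {R D} g {h}.

Lemma intZ (R : realType) (D : set R) (k : R) (g : R -> R) : measurable D ->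
  mu.-integrable D (EFin \o g) -> mu.-integrable D (EFin \o (fun x => k * g x)).
Proof.
move=> mD ig; rewrite (_ : EFin \o _ = (fun x => (k%:E * (EFin \o g) x)%E)).
  exact: integrableZl.
by apply/funext => x /=; rewrite EFinM.
Qed.

Lemma intD (R : realType) (D : set R) (g h : R -> R) : measurable D ->
  mu.-integrable D (EFin \o g) -> mu.-integrable D (EFin \o h) ->
  mu.-integrable D (EFin \o (fun x => g x + h x)).
Proof.
move=> mD ig ih; rewrite (_ : EFin \o _ = (EFin \o g) \+ (EFin \o h)).
  exact: integrableD.
by apply/funext => x /=; rewrite EFinD.
Qed.


Lemma absf_int (R : realType) (psi f : R -> R) : H1loc_deriv psi f ->
  forall a c, a <= c -> mu.-integrable `[a, c] (EFin \o (fun x => `|f x|)).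
Proof.
move=> H a c ac; apply: (dom_int f) => //; first exact: (f_int H).
  case: H => mf _ _; apply: measurableT_comp => //; exact: measurable_funS mf.
by move=> x _; rewrite normr_id.
Qed.

Lemma f2_int (R : realType) (psi f : R -> R) : H1loc_deriv psi f ->
  forall a c, a <= c -> mu.-integrable `[a, c] (EFin \o (fun x => f x ^+ 2)).
Proof. by case=> _ H _ a c ac; exact: H. Qed.
Arguments absf_int {R psi f}.
Arguments f2_int {R psi f}.

Lemma psi_diff (R : realType) (psi f : R -> R) : H1loc_deriv psi f ->
  forall a u v c, a <= u -> u <= v -> v <= c ->
  `|psi v - psi u| <= Rintegral mu `[a, c] (fun x => `|f x|).
Proof.
move=> H a u v c au uv vc; have := H => -[_ _ Hp].
rewrite Hp //; apply: le_trans (le_normr_Rintegral _ _) _ => //.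
  exact: (f_int H).
apply: Rint_subset => //.
- by apply: subset_itvScc; rewrite bnd_simp.
- apply: (absf_int H); exact: le_trans (le_trans au uv) vc.
Qed.

Lemma absf_bound (R : realType) (psi f : R -> R) : H1loc_deriv psi f ->
  forall u v k, u <= v -> 0 < k ->
  Rintegral mu `[u, v] (fun x => `|f x|)
  <= k * Rintegral mu `[u, v] (fun x => f x ^+ 2) + (v - u) / k.
Proof.
move=> H u v k uv k0.
rewrite -RintegralZl //; last exact: (f2_int H).
rewrite -mulrC -(Rint_cst _ _ _ k^-1 uv) -RintegralD //; last 2 first.
- by apply: intZ => //; exact: (f2_int H).
- exact: int_cst.
apply: le_Rintegral => //.
- exact: (absf_int H).
- apply: intD => //; last exact: int_cst.
  by apply: intZ => //; exact: (f2_int H).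
move=> x _.
case: (lerP `|f x| k^-1) => h.
  by rewrite (le_trans h) // lerDr mulr_ge0 // ?sqr_ge0 ?ltW.
rewrite ler_wpDr ?invr_ge0 ?ltW //.
rewrite -real_normK ?num_real // expr2 mulrA.
have h1 : 1 < k * `|f x|.
  by rewrite -(mulfV (lt0r_neq0 k0)) ltr_pM2l.
have h2 : 0 < `|f x| by apply: le_lt_trans h; rewrite invr_ge0 ltW.
nra.
Qed.

Arguments psi_diff {R psi f}.
Arguments absf_bound {R psi f}.

Lemma psi_est (R : realType) (psi f : R -> R) : H1loc_deriv psi f ->
  forall s e, 0 < e -> exists2 d, 0 < d &
    forall r, `|r - s| < d -> `|psi r - psi s| <= e.
Proof.
move=> H s e e0.
set D := Rintegral mu `[s - 1, s + 1] (fun x => f x ^+ 2).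
have D0 : 0 <= D by apply: Rintegral_ge0 => x _; exact: sqr_ge0.
set k := e / (2 * (D + 1)).
have k0 : 0 < k by rewrite divr_gt0 // mulr_gt0 // ltr_wpDl.
exists (Num.min 1 (e * k / 2)).
  by rewrite lt_min ltr01 /= divr_gt0 // mulr_gt0.
have key : forall u v, s - 1 <= u -> u <= v -> v <= s + 1 -> v - u < e * k / 2 ->
    `|psi v - psi u| <= e.
  move=> u v su uv vs vu.
  apply: le_trans (psi_diff H u u v v (lexx _) uv (lexx _)) _.
  apply: le_trans (absf_bound H u v k uv k0) _.
  have DD : Rintegral mu `[u, v] (fun x => f x ^+ 2) <= D.
    apply: Rint_subset => //.
    - by apply: subset_itvScc; rewrite bnd_simp.
    - by move=> x _; exact: sqr_ge0.
    - by apply: (f2_int H); lra.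
  have h1 : k * Rintegral mu `[u, v] (fun x => f x ^+ 2) <= e / 2.
    have hk : k * (2 * (D + 1)) = e.
      by rewrite /k mulrAC -mulrA mulfV ?mulr1 // mulf_neq0 // lt0r_neq0 // ltr_wpDl.
    have := ler_wpM2l (ltW k0) DD; nra.
  have h2 : (v - u) / k <= e / 2.
    rewrite ler_pdivrMr //; apply: ltW; apply: lt_le_trans vu _.
    by rewrite mulrAC.
  lra.
move=> r; rewrite lt_min => /andP[r1 r2].
case: (lerP s r) => sr.
  rewrite ger0_norm ?subr_ge0 // in r1 r2.
  apply: key => //; lra.
rewrite ltr0_norm ?subr_lt0 // in r1 r2.
rewrite distrC; apply: key; try lra.
Qed.

Lemma psi_cont (R : realType) (psi f : R -> R) : H1loc_deriv psi f ->
  continuous psi.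
Proof.
move=> H s; apply/cvgrPdist_le => e e0.
have [d d0 Hd] := psi_est _ _ _ H s _ e0.
near=> t; rewrite distrC; apply: Hd.
near: t; apply/nbhs_ballP; exists d => //= t; by rewrite /ball /= distrC.
Unshelve. all: by end_near.
Qed.


Lemma mono_loc (R : realType) (g : R -> R) (a b : R) : a <= b ->
  (forall s, a <= s -> s <= b -> exists2 d, 0 < d & forall u v, a <= u -> v <= b ->
     s - d < u -> u <= v -> v < s + d -> g v <= g u) ->
  g b <= g a.
Proof.
move=> ab H.
pose S := [set x | a <= x /\ x <= b /\ g x <= g a].
have aS : S a by split => //; split.
have ubS : ubound S b by move=> x [_ []].
have hS : has_sup S by split; [exists a | exists b].
set s := sup S.
have as_ : a <= s by exact: sup_upper_bound.
have sb : s <= b by apply: ge_sup => //; exists a.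
have [d d0 Hd] := H s as_ sb.
have [x [ax [xb gx]] sx] := sup_adherent d0 hS.
have xs : x <= s by exact: sup_upper_bound.
have claim : forall v, s <= v -> v <= b -> v < s + d -> g v <= g a.
  move=> v sv vb vd; apply: le_trans gx.
  apply: Hd => //; last exact: le_trans sv.
case: (ltP s b) => sb'; last first.
  have -> : b = s by apply/eqP; rewrite eq_le sb sb'.
  by apply: claim => //; rewrite ltrDl.
pose v := Num.min b (s + d / 2).
have vS : S v.
  split; first by rewrite le_min ab /=; lra.
  split; first by rewrite ge_min lexx.
  apply: claim.
  - by rewrite le_min (ltW sb') /=; lra.
  - by rewrite ge_min lexx.
  - by rewrite gt_min; apply/orP; right; lra.
have : v <= s by exact: sup_upper_bound.
by rewrite ge_min leNgt sb' /=; lra.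
Qed.

Arguments psi_diff {R psi f}.
Arguments absf_bound {R psi f}.
Arguments psi_est {R psi f}.
Arguments psi_cont {R psi f}.

Lemma norm_tri (R : realType) (x y : R) : `|x| <= `|y| + `|x - y|.
Proof. by have := ler_normD y (x - y); rewrite addrC subrK. Qed.

Lemma psi_meas (R : realType) (psi f : R -> R) : H1loc_deriv psi f ->
  measurable_fun setT psi.
Proof. by move=> H; apply: continuous_measurable_fun; exact: psi_cont H. Qed.
Arguments psi_meas {R psi f}.

Lemma psi_bound (R : realType) (psi f : R -> R) : H1loc_deriv psi f ->
  forall a r c, a <= r -> r <= c ->
  `|psi r| <= `|psi a| + Rintegral mu `[a, c] (fun x => `|f x|).
Proof.
move=> H a r c ar rc.
have := psi_diff H a a r c (lexx _) ar rc.
have := norm_tri _ (psi r) (psi a); lra.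
Qed.
Arguments psi_bound {R psi f}.

Lemma pf_int (R : realType) (psi f : R -> R) : H1loc_deriv psi f ->
  forall a c, a <= c ->
  mu.-integrable `[a, c] (EFin \o (fun x => `|psi x| * `|f x|)).
Proof.
move=> H a c ac.
set M := `|psi a| + Rintegral mu `[a, c] (fun x => `|f x|).
apply: (dom_int (fun x => M * `|f x|)) => //.
- by apply: intZ => //; exact: (absf_int H).
- apply: measurable_funM.
    apply: measurableT_comp => //; exact: measurable_funS (psi_meas H).
  apply: measurableT_comp => //; case: H => mf _ _; exact: measurable_funS mf.
move=> x /=; rewrite in_itv /= => /andP[ax xc].
have M0 : 0 <= M by apply: le_trans (psi_bound H a x c ax xc); exact: normr_ge0.
rewrite normrM !normr_id normrM (ger0_norm M0) normr_id.
by rewrite ler_wpM2r // psi_bound.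
Qed.
Arguments pf_int {R psi f}.

Lemma psi2_int (R : realType) (psi f : R -> R) : H1loc_deriv psi f ->
  forall a c, a <= c ->
  mu.-integrable `[a, c] (EFin \o (fun x => psi x ^+ 2)).
Proof.
move=> H a c ac.
set M := `|psi a| + Rintegral mu `[a, c] (fun x => `|f x|).
apply: (dom_int (fun x => M ^+ 2)) => //.
- exact: int_cst.
- by apply: measurable_funX; exact: measurable_funS (psi_meas H).
move=> x /=; rewrite in_itv /= => /andP[ax xc].
have M0 : 0 <= M by apply: le_trans (psi_bound H a x c ax xc); exact: normr_ge0.
rewrite normrX [X in _ <= X]normrX (ger0_norm M0).
by rewrite lerXn2r ?nnegrE // psi_bound.
Qed.
Arguments psi2_int {R psi f}.

Arguments psi_diff {R psi f}.
Arguments absf_bound {R psi f}.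
Arguments psi_est {R psi f}.
Arguments psi_cont {R psi f}.

Lemma k_int (R : realType) (psi f : R -> R) (e : R) : H1loc_deriv psi f ->
  forall a c, a <= c ->
  mu.-integrable `[a, c] (EFin \o (fun x => 2 * (`|psi x| * `|f x|) + e * `|f x|)).
Proof.
move=> H a c ac; apply: intD => //; apply: intZ => //.
  exact: (pf_int H).
exact: (absf_int H).
Qed.
Arguments k_int {R psi f}.

Lemma Rint_k (R : realType) (psi f : R -> R) (e : R) : H1loc_deriv psi f ->
  forall a c, a <= c ->
  Rintegral mu `[a, c] (fun x => 2 * (`|psi x| * `|f x|) + e * `|f x|) =
  2 * Rintegral mu `[a, c] (fun x => `|psi x| * `|f x|)
  + e * Rintegral mu `[a, c] (fun x => `|f x|).
Proof.
move=> H a c ac; rewrite RintegralD //; last 2 first.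
- by apply: intZ => //; exact: (pf_int H).
- by apply: intZ => //; exact: (absf_int H).
rewrite !RintegralZl //; [exact: (pf_int H)|exact: (absf_int H)].
Qed.
Arguments Rint_k {R psi f}.

Lemma local (R : realType) (psi f : R -> R) (e : R) : H1loc_deriv psi f -> 0 < e ->
  forall s, exists2 d, 0 < d & forall u v, s - d < u -> u <= v -> v < s + d ->
  `|psi v ^+ 2 - psi u ^+ 2| <=
    Rintegral mu `[u, v] (fun x => 2 * (`|psi x| * `|f x|) + e * `|f x|).
Proof.
move=> H e0 s.
have e40 : 0 < e / 4 by rewrite divr_gt0.
have [d d0 Hd] := psi_est H s (e / 4) e40.
exists d => // u v su uv vs.
rewrite (Rint_k e H u v uv).
set I := Rintegral mu `[u, v] (fun x => `|f x|).
have I0 : 0 <= I by apply: Rintegral_ge0 => x _; exact: normr_ge0.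
have hI : `|psi v - psi u| <= I := psi_diff H u u v v (lexx _) uv (lexx _).
have hu : `|psi u - psi s| <= e / 4 by apply: Hd; rewrite ltr_norml; lra.
have hv : `|psi v - psi s| <= e / 4 by apply: Hd; rewrite ltr_norml; lra.
have hs : `|psi v + psi u| <= 2 * `|psi s| + e / 2.
  have := ler_normD (psi v - psi s) (psi u - psi s).
  have := ler_normD (psi v - psi s + (psi u - psi s)) (2 * psi s).
  rewrite normrM (ger0_norm (ler0n _ 2)).
  have -> : psi v - psi s + (psi u - psi s) + 2 * psi s = psi v + psi u by ring.
  lra.
have hP : (`|psi s| - e / 4) * I <= Rintegral mu `[u, v] (fun x => `|psi x| * `|f x|).
  rewrite -RintegralZl //; last exact: (absf_int H).
  apply: le_Rintegral => //.
  - by apply: intZ => //; exact: (absf_int H).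
  - exact: (pf_int H).
  move=> x; rewrite /= in_itv /= => /andP[ux xv].
  apply: ler_wpM2r; first exact: normr_ge0.
  have : `|psi x - psi s| <= e / 4 by apply: Hd; rewrite ltr_norml; lra.
  have := norm_tri _ (psi s) (psi x); rewrite distrC; lra.
have -> : psi v ^+ 2 - psi u ^+ 2 = (psi v - psi u) * (psi v + psi u) by ring.
rewrite normrM.
have := ler_pM (normr_ge0 _) (normr_ge0 _) hI hs.
have := normr_ge0 (psi s).
nra.
Qed.

Arguments k_int {R psi f}.
Arguments local {R psi f}.

Lemma Radd (R : realType) (g : R -> R) (a u v : R) : a <= u -> u <= v ->
  mu.-integrable `[a, v] (EFin \o g) ->
  Rintegral mu `[a, v] g - Rintegral mu `[a, u] g = Rintegral mu `[u, v] g.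
Proof.
move=> au uv ig.
rewrite (@Rintegral_itvB _ g (BLeft a) (BRight v) u) //.
rewrite Rintegral_itv_obnd_cbnd //.
apply: integrableS ig => //.
by apply: subset_itvScc => //; rewrite bnd_simp.
Qed.

Lemma global (R : realType) (psi f : R -> R) (e : R) : H1loc_deriv psi f -> 0 < e ->
  forall a u v, a <= u -> u <= v ->
  `|psi v ^+ 2 - psi u ^+ 2| <=
    Rintegral mu `[u, v] (fun x => 2 * (`|psi x| * `|f x|) + e * `|f x|).
Proof.
move=> H e0 a u v au uv.
set k := (fun x => 2 * (`|psi x| * `|f x|) + e * `|f x|).
set G := fun t => Rintegral mu `[a, t] k.
have GD : forall x y, a <= x -> x <= y -> G y - G x = Rintegral mu `[x, y] k.
  move=> x y ax xy; apply: Radd => //; apply: (k_int e H).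
  exact: le_trans xy.
have loc : forall (sg : R), (sg = 1 \/ sg = -1) ->
    sg * psi v ^+ 2 - G v <= sg * psi u ^+ 2 - G u.
  move=> sg hsg.
  apply: (@mono_loc _ (fun t => sg * psi t ^+ 2 - G t) u v uv).
  move=> s us sv.
  have [d d0 Hd] := local e H e0 s.
  exists d => // x y ux yv sx xy ys.
  have := Hd x y sx xy ys.
  rewrite -(GD x y (le_trans au ux) xy) => h.
  rewrite /=; case: hsg => ->.
    by have := ler_norm (psi y ^+ 2 - psi x ^+ 2); lra.
  by rewrite distrC in h; have := ler_norm (psi x ^+ 2 - psi y ^+ 2); lra.
have h1 := loc 1 (or_introl erefl).
have h2 := loc (-1) (or_intror erefl).
rewrite -/k -(GD u v au uv).
rewrite ler_norml; lra.
Qed.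

Arguments k_int {R psi f}.
Arguments Rint_k {R psi f}.
Arguments global {R psi f}.
Arguments psi_bound {R psi f}.
Arguments psi_meas {R psi f}.
Arguments pf_int {R psi f}.
Arguments psi2_int {R psi f}.

Lemma b_cont (R : realType) (L alpha : R) (b : R -> R) : Lambda L alpha b ->
  continuous b.
Proof.
case=> -[db _] _ _ _ x.
apply: differentiable_continuous; rewrite -derivable1_diffP; exact: db.
Qed.

Lemma b_int (R : realType) (L alpha : R) (b : R -> R) : 0 < L -> 0 < alpha ->
  Lambda L alpha b -> mu.-integrable `[0, L] (EFin \o b).
Proof.
move=> L0 a0 Hb; have bc := b_cont _ _ _ _ Hb; case: Hb => _ b0 _ Lb.
apply/integrableP; split.
  by apply/measurable_EFinP; apply: measurable_funS (continuous_measurable_fun bc).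
have -> : (\int[mu]_(x in `[0%R, L]) `|(EFin \o b) x|)%E
        = (\int[mu]_(x in `[0%R, L]) (b x)%:E)%E.
  by apply: eq_integral => x _ /=; rewrite ger0_norm.
move: Lb; rewrite /Rintegral.
have : (0 <= \int[mu]_(x in `[0%R, L]) (b x)%:E)%E.
  by apply: integral_ge0 => x _; rewrite lee_fin.
case: (\int[mu]_(x in `[0%R, L]) (b x)%:E)%E => //= [r _ _| _ h]; first exact: ltry.
exfalso; move: (mulr_gt0 a0 L0); rewrite -h ltxx; done.
Qed.

Lemma bpsi_int (R : realType) (L alpha : R) (b psi f : R -> R) : 0 < L -> 0 < alpha ->
  Lambda L alpha b -> H1loc_deriv psi f ->
  mu.-integrable `[0, L] (EFin \o (fun x => b x * psi x ^+ 2)).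
Proof.
move=> L0 a0 Hb H.
have bi := b_int _ _ _ _ L0 a0 Hb.
have bc := b_cont _ _ _ _ Hb; case: Hb => _ b0 _ _.
set M := `|psi 0| + Rintegral mu `[0, L] (fun x => `|f x|).
apply: (dom_int (fun x => b x * M ^+ 2)) => //.
- rewrite (_ : (fun x => b x * M ^+ 2) = (fun x => M ^+ 2 * b x)).
    exact: intZ.
  by apply/funext => x; rewrite mulrC.
- apply: measurable_funM.
    exact: measurable_funS (continuous_measurable_fun bc).
  by apply: measurable_funX; exact: measurable_funS (psi_meas H).
move=> x /=; rewrite in_itv /= => /andP[ax xc].
have M0 : 0 <= M by apply: le_trans (psi_bound H 0 x L ax xc); exact: normr_ge0.
rewrite !normrM (ger0_norm (b0 x)) ler_wpM2l //.
rewrite (ger0_norm M0); have := psi_bound H 0 x L ax xc; have := normr_ge0 (psi x).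
move=> g1 g2; exact: (ler_pM g1 g1 g2 g2).
Qed.

Lemma main_closed (R : realType) (L alpha : R) (b psi f : R -> R) : 0 < L -> 0 < alpha ->
  Lambda L alpha b -> H1loc_deriv psi f ->
  Rintegral mu `[0, L] (fun x => b x * psi x ^+ 2) <=
  Rintegral mu `[0, L] (fun x => f x ^+ 2)
  + (alpha + alpha ^+ 2 * L ^+ 2) * Rintegral mu `[0, L] (fun x => psi x ^+ 2).
Proof.
move=> L0 a0 Hb H.
have bi := b_int _ _ _ _ L0 a0 Hb.
have bpi := bpsi_int _ _ _ _ _ _ L0 a0 Hb H.
have bc := b_cont _ _ _ _ Hb; case: Hb => _ b0 _ Lb.
have L0' : 0 <= L by exact: ltW.
set P := Rintegral mu `[0, L] (fun x => psi x ^+ 2).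
set D := Rintegral mu `[0, L] (fun x => f x ^+ 2).
set Q := Rintegral mu `[0, L] (fun x => b x * psi x ^+ 2).
set A := Rintegral mu `[0, L] (fun x => `|psi x| * `|f x|).
set B := Rintegral mu `[0, L] (fun x => `|f x|).
have B0 : 0 <= B by apply: Rintegral_ge0 => x _; exact: normr_ge0.
have step5 : 2 * (alpha * L) * A <= D + alpha ^+ 2 * L ^+ 2 * P.
  rewrite /A /D /P -RintegralZl //; last exact: (pf_int H).
  rewrite -RintegralZl //; last exact: (psi2_int H).
  rewrite -RintegralD //; last 2 first.
  - exact: (f2_int H).
  - by apply: intZ => //; exact: (psi2_int H).
  apply: le_Rintegral => //.
  - by apply: intZ => //; exact: (pf_int H).
  - apply: intD => //; first exact: (f2_int H).
    by apply: intZ => //; exact: (psi2_int H).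
  move=> x _.
  have := sqr_ge0 (`|f x| - alpha * L * `|psi x|).
  rewrite -[f x ^+ 2]real_normK ?num_real // -[psi x ^+ 2]real_normK ?num_real //.
  nra.
suff : forall e, 0 < e -> Q <= D + alpha * P + alpha ^+ 2 * L ^+ 2 * P + e * (alpha * L * B).
  move=> HH; apply/ler_addgt0Pr => t t0.
  have aLB : 0 < alpha * L * B + 1 by rewrite ltr_wpDl // !mulr_ge0 // ltW.
  have := HH (t / (alpha * L * B + 1)) (divr_gt0 t0 aLB).
  have : t / (alpha * L * B + 1) * (alpha * L * B) <= t.
    rewrite mulrAC ler_pdivrMr // ler_pM2l //; lra.
  lra.
move=> e e0.
set K := Rintegral mu `[0, L] (fun x => 2 * (`|psi x| * `|f x|) + e * `|f x|).
have KE : K = 2 * A + e * B by rewrite /K (Rint_k e H 0 L L0').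
have step3 : forall x, 0 <= x <= L -> psi x ^+ 2 <= P / L + K.
  move=> x /andP[x0 xL].
  have hy : forall y, 0 <= y <= L -> psi x ^+ 2 <= psi y ^+ 2 + K.
    move=> y /andP[y0 yL].
    have kk : forall u v, 0 <= u -> u <= v -> v <= L ->
        `|psi v ^+ 2 - psi u ^+ 2| <= K.
      move=> u v u0 uv vL.
      apply: le_trans (global e H e0 u u v (lexx _) uv) _.
      apply: Rint_subset => //.
      - by apply: subset_itvScc; rewrite bnd_simp.
      - move=> z _; rewrite addr_ge0 // mulr_ge0 // ?mulr_ge0 // ?normr_ge0 //.
        exact: ltW.
      - exact: (k_int e H).
    case: (lerP y x) => yx.
      have := kk y x y0 yx xL; have := ler_norm (psi x ^+ 2 - psi y ^+ 2); lra.
    have := kk x y x0 (ltW yx) yL; rewrite distrC.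
    have := ler_norm (psi x ^+ 2 - psi y ^+ 2); lra.
  have : Rintegral mu `[0, L] (fun=> psi x ^+ 2) <=
         Rintegral mu `[0, L] (fun y => psi y ^+ 2 + K).
    apply: le_Rintegral => //.
    - exact: int_cst.
    - apply: intD => //; first exact: (psi2_int H).
      exact: int_cst.
  rewrite RintegralD //; last 2 first.
  - exact: (psi2_int H).
  - exact: int_cst.
  rewrite !Rint_cst // subr0 -/P => h.
  rewrite -(ler_pM2r L0) mulrDl divfK ?lt0r_neq0 //; lra.
have step4 : Q <= (P / L + K) * (alpha * L).
  rewrite -Lb -RintegralZl //.
  apply: le_Rintegral => //.
  - by apply: intZ.
  move=> x; rewrite /= in_itv /= => hx.
  rewrite mulrC; apply: ler_wpM2r; first exact: b0.
  exact: step3.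
have eq : (P / L + K) * (alpha * L) = alpha * P + alpha * L * K.
  by field; rewrite lt0r_neq0.
rewrite eq KE in step4.
have e2 : alpha * L * (2 * A + e * B) = 2 * (alpha * L) * A + e * (alpha * L * B) by ring.
lra.
Qed.

Theorem mainTheorem14 (R : realType) (L alpha : R) (b psi dpsi : R -> R) :
  0 < L -> 0 < alpha -> Lambda L alpha b -> E_L L psi dpsi ->
  Rintegral (@lebesgue_measure R) `[0, L[ (fun x => (dpsi x) ^+ 2)
  - Rintegral (@lebesgue_measure R) `[0, L[ (fun x => b x * (psi x) ^+ 2)
  >= - (alpha + alpha ^+ 2 * L ^+ 2)
     * Rintegral (@lebesgue_measure R) `[0, L[ (fun x => (psi x) ^+ 2).
Proof.
move=> L0 a0 Hb [H _ _].
have L0' : 0 <= L by exact: ltW.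
have sub : `[0, L[ `<=` `[0, L] by apply: subset_itvScc; rewrite bnd_simp.
have mc := main_closed _ _ _ _ _ _ L0 a0 Hb H.
rewrite !Rintegral_itv_bndo_bndc; first lra.
- eapply integrableS; [| |exact: sub|exact: (bpsi_int _ _ _ _ _ _ L0 a0 Hb H)] => //.
- eapply integrableS; [| |exact: sub|exact: (f2_int H 0 L L0')] => //.
- eapply integrableS; [| |exact: sub|exact: (psi2_int H 0 L L0')] => //.
Qed.
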